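(* For $k\in\{1,\dots,N\}$ let $J_k$ denote the transitional index for $k$ gain tickets, i.e. $J_k:=\min\{j\in\{1,\dots,k\}: j\,h^+_{j+1,k}\ge\sum_{j'=1}^{j}h^+_{j',k}\}$ with $h^+_{k+1,k}:=\infty$. Then the sequence $(J_k)_{k=1}^{N}$ is monotonically nondecreasing.
   Context: Fix $N\in\mathbb{N}$. A function $f:[0,1]\to\mathbb{R}$ is inverse S-shaped if it is strictly increasing, continuously differentiable, and there is $x_0\in[0,1]$ such that $f'$ is strictly decreasing on $[0,x_0]$ and strictly increasing on $[x_0,1]$. Let $W^+:[0,1]\to[0,1]$ be inverse S-shaped with $W^+(0)=0$, $W^+(1)=1$. For $k\in\{1,\dots,N\}$ and $j\in\{1,\dots,k\}$ let $h^+_{j,k}:=W^+\!\left(\frac{k-j+1}{N}\right)-W^+\!\left(\frac{k-j}{N}\right)$. *)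

(* Defs.v *)
From Stdlib Require Import Reals Arith.
Open Scope R_scope.

Definition deriv_within01 (f : R -> R) (x d : R) : Prop :=
  forall eps, 0 < eps -> exists delta, 0 < delta /\
    forall y, 0 <= y <= 1 -> 0 < Rabs (y - x) < delta ->
      Rabs ((f y - f x) / (y - x) - d) < eps.

Definition cont_within01 (g : R -> R) (x : R) : Prop :=
  forall eps, 0 < eps -> exists delta, 0 < delta /\
    forall y, 0 <= y <= 1 -> Rabs (y - x) < delta -> Rabs (g y - g x) < eps.

Definition inverse_S_shaped (f : R -> R) : Prop :=
  (forall x y, 0 <= x -> x < y -> y <= 1 -> f x < f y) /\
  exists f' : R -> R,
    (forall x, 0 <= x <= 1 -> deriv_within01 f x (f' x)) /\
    (forall x, 0 <= x <= 1 -> cont_within01 f' x) /\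
    exists x0, 0 <= x0 <= 1 /\
      (forall x y, 0 <= x -> x < y -> y <= x0 -> f' y < f' x) /\
      (forall x y, x0 <= x -> x < y -> y <= 1 -> f' x < f' y).

Definition hplus (W : R -> R) (N j k : nat) : R :=
  W (INR (k - j + 1) / INR N) - W (INR (k - j) / INR N).

Fixpoint hsum (W : R -> R) (N k j : nat) : R :=
  match j with
  | O => 0
  | S j' => hsum W N k j' + hplus W N (S j') k
  end.

(* Transition condition j h^+_{j+1,k} >= \sum_{j'<=j} h^+_{j',k},
   with h^+_{k+1,k} = +infinity (so it holds for j = k). *)
Definition trans_cond (W : R -> R) (N k j : nat) : bool :=
  if Nat.eqb j k then true
  else if Rle_dec (hsum W N k j) (INR j * hplus W N (S j) k) then true else false.

Fixpoint least_from (p : nat -> bool) (j fuel : nat) : nat :=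
  match fuel with
  | O => j
  | S f => if p j then j else least_from p (S j) f
  end.

Definition Jidx (W : R -> R) (N k : nat) : nat :=
  least_from (trans_cond W N k) 1 k.

(* Main.v *)
Require Import Defs.
From Stdlib Require Import Reals Arith Lra Lia.
Open Scope R_scope.

Definition clamp (x : R) := Rmax 0 (Rmin 1 x).

Lemma clamp_id x : 0 <= x <= 1 -> clamp x = x.
Proof. intros H; unfold clamp, Rmax, Rmin; repeat destruct Rle_dec; lra. Qed.

Lemma clamp_in x : 0 <= clamp x <= 1.
Proof. unfold clamp, Rmax, Rmin; repeat destruct Rle_dec; lra. Qed.

Lemma clamp_lip x y : Rabs (clamp y - clamp x) <= Rabs (y - x).
Proof. unfold clamp, Rmax, Rmin; repeat destruct Rle_dec; unfold Rabs; repeat destruct Rcase_abs; lra. Qed.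

Lemma derivF W W' c : 0 < c < 1 -> deriv_within01 W c (W' c) ->
  derivable_pt_lim (fun x => W (clamp x)) c (W' c).
Proof.
  intros Hc HD eps Heps.
  destruct (HD eps Heps) as [d [Hd H]].
  assert (Hp : 0 < Rmin d (Rmin c (1 - c))).
  { apply Rmin_glb_lt; [lra|apply Rmin_glb_lt; lra]. }
  exists (mkposreal _ Hp). intros h Hh Hha. simpl in Hha.
  assert (Hm1 := Rmin_l d (Rmin c (1-c))).
  assert (Hm2 := Rmin_r d (Rmin c (1-c))).
  assert (Hm3 := Rmin_l c (1-c)).
  assert (Hm4 := Rmin_r c (1-c)).
  assert (Hh' : - h <= Rabs h /\ h <= Rabs h) by (unfold Rabs; destruct Rcase_abs; lra).
  rewrite (clamp_id (c+h)) by lra. rewrite (clamp_id c) by lra.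
  specialize (H (c+h) ltac:(lra)).
  replace (c + h - c) with h in H by ring.
  apply H. split; [apply Rabs_pos_lt; auto | lra].
Qed.

Lemma contF W W' c : 0 <= c <= 1 -> deriv_within01 W c (W' c) ->
  continuity_pt (fun x => W (clamp x)) c.
Proof.
  intros Hc HD.
  unfold continuity_pt, continue_in, limit1_in, limit_in. simpl. unfold R_dist.
  intros eps Heps.
  destruct (HD 1 Rlt_0_1) as [d [Hd H]].
  set (K := Rabs (W' c) + 1).
  assert (HK : 0 < K) by (unfold K; pose proof (Rabs_pos (W' c)); lra).
  assert (Hp : 0 < Rmin d (eps / K)).
  { apply Rmin_glb_lt; [lra| apply Rdiv_lt_0_compat; lra]. }
  exists (Rmin d (eps / K)). split; [exact Hp|].
  intros x [_ Hx].
  rewrite (clamp_id c) by lra.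
  assert (Hl := clamp_lip c x). rewrite (clamp_id c) in Hl by lra.
  assert (Hm1 := Rmin_l d (eps/K)). assert (Hm2 := Rmin_r d (eps/K)).
  destruct (Req_dec (clamp x) c) as [E|E].
  { rewrite E. replace (W c - W c) with 0 by ring. rewrite Rabs_R0; lra. }
  assert (Hin := clamp_in x).
  set (y := clamp x) in *.
  assert (Hy : 0 < Rabs (y - c)) by (apply Rabs_pos_lt; lra).
  specialize (H y Hin ltac:(split; lra)).
  assert (Eq : W y - W c = ((W y - W c) / (y - c) - W' c + W' c) * (y - c))
    by (field; lra).
  rewrite Eq, Rabs_mult.
  assert (Rabs ((W y - W c) / (y - c) - W' c + W' c) <= K).
  { unfold K. eapply Rle_trans; [apply Rabs_triang|]. lra. }
  assert (Rabs (y - c) < eps / K) by lra.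
  apply Rle_lt_trans with (K * Rabs (y - c)).
  { apply Rmult_le_compat_r; [apply Rabs_pos| lra]. }
  replace eps with (K * (eps / K)) by (field; lra).
  apply Rmult_lt_compat_l; lra.
Qed.

Lemma mvtW W W' u v : 0 <= u -> u < v -> v <= 1 ->
  (forall x, 0 <= x <= 1 -> deriv_within01 W x (W' x)) ->
  exists c, u < c < v /\ W v - W u = W' c * (v - u).
Proof.
  intros Hu Huv Hv HD.
  set (F := fun x => W (clamp x)).
  assert (pr1 : forall c, u < c < v -> derivable_pt F c).
  { intros c Hc. exists (W' c). apply derivF; [lra| apply HD; lra]. }
  assert (pr2 : forall c, u < c < v -> derivable_pt id c).
  { intros c _. apply derivable_pt_id. }
  destruct (MVT F id u v
     (fun c Hc => exist _ (W' c) (derivF W W' c ltac:(lra) (HD c ltac:(lra))))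
     (fun c _ => derivable_pt_id c) Huv) as [c [P Hc]].
  { intros c Hc. apply (contF W W' c); [lra| apply HD; lra]. }
  { intros c Hc. apply derivable_continuous_pt, derivable_pt_id. }
  exists c. split; [exact P|].
  simpl in Hc. rewrite derive_pt_id in Hc. unfold F, id in Hc.
  rewrite (clamp_id u), (clamp_id v) in Hc by lra. lra.
Qed.

Definition wv (W : R -> R) (N m : nat) := W (INR (m+1) / INR N) - W (INR m / INR N).

Lemma xle N m n : (1 <= N)%nat -> (m <= n)%nat -> INR m / INR N <= INR n / INR N.
Proof.
  intros HN Hmn. assert (0 < INR N) by (apply lt_0_INR; lia).
  apply Rmult_le_compat_r; [left; apply Rinv_0_lt_compat; lra| apply le_INR; lia].
Qed.

Lemma xlt N m n : (1 <= N)%nat -> (m < n)%nat -> INR m / INR N < INR n / INR N.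
Proof.
  intros HN Hmn. assert (0 < INR N) by (apply lt_0_INR; lia).
  apply Rmult_lt_compat_r; [apply Rinv_0_lt_compat; lra| apply lt_INR; lia].
Qed.

Lemma x01 N m : (1 <= N)%nat -> (m <= N)%nat -> 0 <= INR m / INR N <= 1.
Proof.
  intros HN Hm. assert (0 < INR N) by (apply lt_0_INR; lia).
  split. { unfold Rdiv; apply Rmult_le_pos; [apply pos_INR| left; apply Rinv_0_lt_compat; lra]. }
  replace 1 with (INR N / INR N) by (field; lra). apply xle; lia.
Qed.

Lemma wv_mvt W W' N m : (1 <= N)%nat -> (m + 1 <= N)%nat ->
  (forall x, 0 <= x <= 1 -> deriv_within01 W x (W' x)) ->
  exists c, INR m / INR N < c < INR (m+1) / INR N /\ wv W N m = W' c * / INR N.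
Proof.
  intros HN Hm HD.
  assert (0 < INR N) by (apply lt_0_INR; lia).
  destruct (mvtW W W' (INR m / INR N) (INR (m+1) / INR N)) as [c [Hc E]]; auto.
  - apply x01; lia.
  - apply xlt; lia.
  - apply x01; lia.
  - exists c. split; auto. unfold wv. rewrite E. f_equal.
    rewrite plus_INR. simpl. field. lra.
Qed.

Lemma QC N W : (1 <= N)%nat -> inverse_S_shaped W ->
  forall a i b, (a < i)%nat -> (i < b)%nat -> (b + 1 <= N)%nat ->
  wv W N i < Rmax (wv W N a) (wv W N b).
Proof.
  intros HN [_ [W' [HD [_ [x0 [Hx0 [Hdec Hinc]]]]]]] a i b Hai Hib HbN.
  assert (0 < INR N) by (apply lt_0_INR; lia).
  assert (Hiv : 0 < / INR N) by (apply Rinv_0_lt_compat; lra).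
  destruct (wv_mvt W W' N a) as [ca [Ha Ea]]; auto; try lia.
  destruct (wv_mvt W W' N i) as [ci [Hi Ei]]; auto; try lia.
  destruct (wv_mvt W W' N b) as [cb [Hb Eb]]; auto; try lia.
  pose proof (xle N (a+1) i HN ltac:(lia)).
  pose proof (xle N (i+1) b HN ltac:(lia)).
  pose proof (x01 N a HN ltac:(lia)).
  pose proof (x01 N (b+1) HN ltac:(lia)).
  rewrite Ea, Ei, Eb.
  destruct (Rle_dec ci x0).
  - apply Rlt_le_trans with (W' ca * / INR N); [|apply Rmax_l].
    apply Rmult_lt_compat_r; auto. apply Hdec; lra.
  - apply Rlt_le_trans with (W' cb * / INR N); [|apply Rmax_r].
    apply Rmult_lt_compat_r; auto. apply Hinc; lra.
Qed.

Lemma hplus_wv W N j k : hplus W N j k = wv W N (k - j).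
Proof. reflexivity. Qed.

Lemma hsum_shift W N k j : hsum W N (S k) (S j) = hplus W N 1 (S k) + hsum W N k j.
Proof.
  induction j as [|j IH].
  - simpl. ring.
  - change (hsum W N (S k) (S (S j))) with (hsum W N (S k) (S j) + hplus W N (S (S j)) (S k)).
    rewrite IH. simpl hsum. change (hplus W N (S (S j)) (S k)) with (hplus W N (S j) k). ring.
Qed.

Lemma exists_big W N k m c : INR m * c < hsum W N k m ->
  exists j, (1 <= j <= m)%nat /\ c < hplus W N j k.
Proof.
  induction m as [|m IH]; intros H.
  - simpl in H. lra.
  - destruct (Rlt_dec c (hplus W N (S m) k)) as [Hl|Hl].
    + exists (S m). split; [lia|exact Hl].
    + simpl hsum in H. rewrite S_INR in H.
      destruct IH as [j [Hj Hc]]; [lra|]. exists j. split; [lia|exact Hc].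
Qed.

Lemma tc_false W N k j : (j <> k)%nat -> trans_cond W N k j = false ->
  INR j * hplus W N (S j) k < hsum W N k j.
Proof.
  intros Hjk H. unfold trans_cond in H.
  destruct (Nat.eqb_spec j k); [lia|].
  destruct Rle_dec; [discriminate|lra].
Qed.

Lemma key W N k j : (1 <= N)%nat -> inverse_S_shaped W ->
  (1 <= j)%nat -> (j < k)%nat -> (S k <= N)%nat ->
  trans_cond W N k j = false -> ((2 <= j)%nat -> trans_cond W N k (j-1) = false) ->
  trans_cond W N (S k) j = false.
Proof.
  intros HN HW Hj Hjk HkN H1 H2.
  destruct j as [|j']; [lia|].
  unfold trans_cond.
  destruct (Nat.eqb_spec (S j') (S k)); [lia|].
  destruct Rle_dec as [r|r]; [|reflexivity]. exfalso.
  rewrite hsum_shift in r.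
  change (hplus W N (S (S j')) (S k)) with (hplus W N (S j') k) in r.
  apply tc_false in H1; [|lia].
  destruct j' as [|j''].
  - simpl hsum in H1, r. rewrite !hplus_wv in H1, r. simpl INR in H1, r.
    pose proof (QC N W HN HW (k-2) (k-1) k ltac:(lia) ltac:(lia) ltac:(lia)) as Q.
    replace (S k - 1)%nat with k in r by lia. unfold Rmax in Q; destruct Rle_dec; lra.
  - specialize (H2 ltac:(lia)). replace (S (S j'') - 1)%nat with (S j'') in H2 by lia.
    apply tc_false in H2; [|lia].
    destruct (exists_big W N k (S j'') _ H2) as [m [Hm Hc]].
    rewrite !hplus_wv in Hc, r.
    pose proof (QC N W HN HW (k - S (S j'')) (k - m) k ltac:(lia) ltac:(lia) ltac:(lia)) as Q.
    rewrite S_INR in r.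
    rewrite hplus_wv in H2. replace (S k - 1)%nat with k in r by lia. unfold Rmax in Q; destruct Rle_dec; lra.
Qed.

Lemma least_spec (p : nat -> bool) fuel m :
  let r := least_from p m fuel in
  (m <= r <= m + fuel)%nat /\ (forall j, (m <= j < r)%nat -> p j = false) /\
  ((r < m + fuel)%nat -> p r = true).
Proof.
  revert m. induction fuel as [|f IH]; intros m; simpl.
  - split; [lia|]. split; [intros; lia| intros; lia].
  - destruct (p m) eqn:E.
    + split; [lia|]. split; [intros; lia| auto].
    + destruct (IH (S m)) as [A [B C]].
      split; [lia|]. split.
      * intros j Hj. destruct (Nat.eq_dec j m); [subst; auto| apply B; lia].
      * intros Hr. apply C. lia.
Qed.

Lemma J_step N W k : (1 <= N)%nat -> inverse_S_shaped W -> (1 <= k)%nat -> (S k <= N)%nat ->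
  (Jidx W N k <= Jidx W N (S k))%nat.
Proof.
  intros HN HW Hk HkN. unfold Jidx.
  destruct (least_spec (trans_cond W N k) k 1) as [A1 [B1 C1]].
  destruct (least_spec (trans_cond W N (S k)) (S k) 1) as [A2 [B2 C2]].
  set (J1 := least_from (trans_cond W N k) 1 k) in *.
  set (J2 := least_from (trans_cond W N (S k)) 1 (S k)) in *.
  assert (HJ1 : (J1 <= k)%nat).
  { destruct (Nat.eq_dec J1 (1 + k)); [|lia].
    assert (trans_cond W N k k = false) by (apply B1; lia).
    unfold trans_cond in H. rewrite Nat.eqb_refl in H. discriminate. }
  destruct (le_lt_dec J1 J2) as [|Hlt]; [assumption|exfalso].
  assert (T : trans_cond W N (S k) J2 = true) by (apply C2; lia).
  rewrite key in T; [discriminate| auto| auto| lia| lia| lia| apply B1; lia|].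
  intros. apply B1; lia.
Qed.

Theorem lemma4 (N : nat) (W : R -> R) :
  (1 <= N)%nat ->
  inverse_S_shaped W ->
  (forall x, 0 <= x <= 1 -> 0 <= W x <= 1) ->
  W 0 = 0 -> W 1 = 1 ->
  forall k1 k2 : nat, (1 <= k1)%nat -> (k1 <= k2)%nat -> (k2 <= N)%nat ->
    (Jidx W N k1 <= Jidx W N k2)%nat.
Proof.
  intros HN HW _ _ _ k1 k2 H1 H12 H2.
  induction H12 as [|k2 H12 IH]; [lia|].
  eapply Nat.le_trans; [apply IH; lia|]. apply J_step; auto; lia.
Qed.
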